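(* For every $n\in\mathbb{N}$, all nonempty chains $c_k,c_s$ over $[n]$, and all formulas $\varphi,\psi$: letting $c_r$ be the chain of symbols common to $c_k$ and $c_s$, $$\vdash_{(n)}\neg_{c_k}\varphi\to_{(n)}\big(\neg_{c_s}\psi\to_{(n)}\neg_{c_s\otimes c_r}(\varphi\to_{(n)}\psi)\big).$$
   Context: Fix $n\in\mathbb{N}$, $n\ge 1$, and write $[n]=\{1,\dots,n\}$. Chains: a chain over $[n]$ is a finite sequence of distinct elements of $[n]$; chains with the same length and the same symbols are identified, so a chain is effectively a subset of $[n]$. $c_k$ denotes a chain with $k$ symbols, $\epsilon$ the empty chain, and $(n)$ the chain consisting of all symbols of $[n]$. For chains $c,d$: the concatenation $c\cdot d$ is the chain of symbols occurring in $c$ or in $d$; the coconcatenation $c\otimes d$ is the chain of symbols occurring in exactly one of $c,d$; $d$ is a subchain of $c$ if every symbol of $d$ is a symbol of $c$. The complementary chain $c'_{n-k}$ of $c_k$ is the chain of the symbols of $[n]$ not occurring in $c_k$. Language of $\mathbf{CPN}_n$: a countable set $P_n$ of propositional letters; constants $\perp_c$ for each chain $c$ over $[n]$ with $1\le |c|\le n-1$, and constants $\perp_{(n)}$ (contradiction) and $\top_{(n)}$ (truth); a unary connective $\neg_c$ for each nonempty chain $c$ over $[n]$ ($\neg_{(n)}$ is the strong negation; the $\neg_c$ with $|c|\le n-1$ are weak negations); a binary connective $\to_{(n)}$. Formulas: propositional letters and constants are formulas; if $\varphi,\psi$ are formulas then so are $\neg_c\varphi$ and $(\varphi\to_{(n)}\psi)$.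 Conventions: $\neg_\epsilon\varphi:=\varphi$, $\perp_\epsilon:=\top_{(n)}$, and $\perp_c$ for $c=(n)$ means $\perp_{(n)}$. Abbreviations: $\varphi\wedge_{(n)}\psi:=\neg_{(n)}(\varphi\to_{(n)}\neg_{(n)}\psi)$, $\varphi\vee_{(n)}\psi:=\neg_{(n)}\varphi\to_{(n)}\psi$, $\varphi\leftrightarrow_{(n)}\psi:=(\varphi\to_{(n)}\psi)\wedge_{(n)}(\psi\to_{(n)}\varphi)$. Axioms of $\mathbf{CPN}_n$, for all formulas $\varphi,\psi,\chi$ and all nonempty chains $c_k,c_r$ over $[n]$: (A1) $\varphi\to_{(n)}(\psi\to_{(n)}\varphi)$; (A2) $(\varphi\to_{(n)}(\psi\to_{(n)}\chi))\to_{(n)}((\varphi\to_{(n)}\psi)\to_{(n)}(\varphi\to_{(n)}\chi))$; (A3) $(\neg_{(n)}\psi\to_{(n)}\neg_{(n)}\varphi)\to_{(n)}((\neg_{(n)}\psi\to_{(n)}\varphi)\to_{(n)}\psi)$; (A4) $\varphi\to_{(n)}(\perp_{c_k}\to_{(n)}\neg_{c_k}\varphi)$; (A5) $\neg_{c_k}\neg_{c_r}\varphi\leftrightarrow_{(n)}\neg_{c_k\otimes c_r}\varphi$; (A6) $\neg_{c_k}\perp_{c_r}\leftrightarrow_{(n)}\perp_{c_k\otimes c_r}$; (A7) $\perp_{c_k}\to_{(n)}\perp_{c_r}$, whenever $c_r$ is a subchain of $c_k$. The only rule of inference is modus ponens (from $\varphi$ and $\varphi\to_{(n)}\psi$ infer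 $\psi$). For a set $\Sigma$ of formulas, $\Sigma\vdash_{(n)}\varphi$ means there is a finite sequence of formulas ending with $\varphi$, each of which is an axiom, a member of $\Sigma$, or obtained from two earlier members by modus ponens; $\vdash_{(n)}\varphi$ means $\emptyset\vdash_{(n)}\varphi$. *)

(* Defs.v *)
(* Chains over [n] are identified with subsets of 'I_n. *)
From mathcomp Require Import all_boot.
Set Implicit Arguments. Unset Strict Implicit. Unset Printing Implicit Defensive.

Section CPN.
Variable n : nat.

Definition chain := {set 'I_n}.

Definition cocat (c d : chain) : chain := (c :\: d) :|: (d :\: c).
Definition cat_ch (c d : chain) : chain := c :|: d.
Definition common (c d : chain) : chain := c :&: d.

(* Bot c encodes the constants: Bot set0 = top_(n), Bot setT = bot_(n),
   Bot c with 1 <= |c| <= n-1 = bot_c.  Neg c is only available for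
   nonempty chains c (neg_(n) is Neg setT). *)
Inductive form : Type :=
  | Var : nat -> form
  | Bot : chain -> form
  | Neg : forall c : chain, c != set0 -> form -> form
  | Imp : form -> form -> form.

(* neg_c with the convention neg_eps phi := phi *)
Definition neg (c : chain) (phi : form) : form :=
  match boolP (c != set0) with
  | AltTrue h => Neg h phi
  | AltFalse _ => phi
  end.

Definition sneg (phi : form) : form := neg setT phi.
Definition fand (phi psi : form) : form := sneg (Imp phi (sneg psi)).
Definition for_ (phi psi : form) : form := Imp (sneg phi) psi.
Definition fiff (phi psi : form) : form := fand (Imp phi psi) (Imp psi phi).

Inductive axiom : form -> Prop :=
  | A1 phi psi : axiom (Imp phi (Imp psi phi))
  | A2 phi psi chi :
      axiom (Imp (Imp phi (Imp psi chi)) (Imp (Imp phi psi) (Imp phi chi)))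
  | A3 phi psi :
      axiom (Imp (Imp (sneg psi) (sneg phi)) (Imp (Imp (sneg psi) phi) psi))
  | A4 (ck : chain) phi : ck != set0 ->
      axiom (Imp phi (Imp (Bot ck) (neg ck phi)))
  | A5 (ck cr : chain) phi : ck != set0 -> cr != set0 ->
      axiom (fiff (neg ck (neg cr phi)) (neg (cocat ck cr) phi))
  | A6 (ck cr : chain) : ck != set0 -> cr != set0 ->
      axiom (fiff (neg ck (Bot cr)) (Bot (cocat ck cr)))
  | A7 (ck cr : chain) : ck != set0 -> cr != set0 -> cr \subset ck ->
      axiom (Imp (Bot ck) (Bot cr)).

Inductive derivable (Sigma : form -> Prop) : form -> Prop :=
  | d_ax phi : axiom phi -> derivable Sigma phi
  | d_hyp phi : Sigma phi -> derivable Sigma phi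
  | d_mp phi psi : derivable Sigma phi -> derivable Sigma (Imp phi psi) ->
                   derivable Sigma psi.

Definition provable (phi : form) : Prop := derivable (fun _ => False) phi.

End CPN.

(* Main.v *)
Require Import Defs.
From mathcomp Require Import all_boot.
Set Implicit Arguments. Unset Strict Implicit. Unset Printing Implicit Defensive.

Section Prop1.
Variable n : nat.
Notation F := (form n).
Implicit Types (S : F -> Prop) (A B C : F).

Definition ext S A : F -> Prop := fun x => S x \/ x = A.

Lemma weaken S S' A : (forall x, S x -> S' x) -> derivable S A -> derivable S' A.
Proof. move=> h; elim=> [x ax|x hx|x y _ h1 _ h2]; [exact: d_ax|exact/d_hyp/h|exact: d_mp h1 h2]. Qed.

Lemma mp S A B : derivable S A -> derivable S (Imp A B) -> derivable S B.
Proof. exact: d_mp. Qed.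

Lemma ax1 S A B : derivable S (Imp A (Imp B A)). Proof. exact/d_ax/A1. Qed.
Lemma ax2 S A B C : derivable S (Imp (Imp A (Imp B C)) (Imp (Imp A B) (Imp A C))).
Proof. exact/d_ax/A2. Qed.
Lemma ax3 S A B : derivable S (Imp (Imp (sneg B) (sneg A)) (Imp (Imp (sneg B) A) B)).
Proof. exact/d_ax/A3. Qed.

Lemma imp_refl S A : derivable S (Imp A A).
Proof.
apply: mp (ax1 _ A A) _. apply: mp (ax1 _ A (Imp A A)) _. exact: ax2.
Qed.

Lemma hyp S A : derivable (ext S A) A. Proof. by apply: d_hyp; right. Qed.
Lemma lift S A B : derivable S B -> derivable (ext S A) B.
Proof. by apply: weaken => x; left. Qed.

Lemma deduction S A B : derivable (ext S A) B -> derivable S (Imp A B).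
Proof.
elim=> [x ax|x [hx|->]|x y _ h1 _ h2].
- exact: mp (d_ax _ ax) (ax1 _ _ _).
- exact: mp (d_hyp hx) (ax1 _ _ _).
- exact: imp_refl.
- exact: mp h1 (mp h2 (ax2 _ _ _ _)).
Qed.

Lemma dne S B : derivable S (Imp (sneg (sneg B)) B).
Proof.
apply: deduction. apply: mp (imp_refl _ _) _.
apply: mp (ax3 _ (sneg B) B). exact: mp (hyp _ _) (ax1 _ _ _).
Qed.

Lemma dni S B : derivable S (Imp B (sneg (sneg B))).
Proof.
apply: deduction. apply: mp (mp (hyp _ _) (ax1 _ _ (sneg (sneg (sneg B))))) _.
apply: mp (ax3 _ B (sneg (sneg B))). exact: dne.
Qed.

Lemma efq S A B : derivable S (Imp (sneg A) (Imp A B)).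
Proof.
do 2 apply: deduction.
apply: mp (mp (hyp _ _) (ax1 _ _ (sneg B))) _.
apply: mp (ax3 _ A B). exact: mp (lift _ (hyp _ _)) (ax1 _ _ _).
Qed.

Lemma contra S A B : derivable S (Imp (Imp (sneg B) (sneg A)) (Imp A B)).
Proof.
do 2 apply: deduction.
apply: mp (mp (hyp _ _) (ax1 _ _ (sneg B))) _.
apply: mp (ax3 _ A B). exact: lift (hyp _ _).
Qed.

Lemma contrapos S A B : derivable S (Imp (Imp A B) (Imp (sneg B) (sneg A))).
Proof.
apply: deduction. apply: mp _ (contra _ (sneg B) (sneg A)).
apply: deduction. apply: mp _ (dni _ _).
apply: mp (lift _ (hyp _ _)). exact: mp (hyp _ _) (dne _ _).
Qed.

Lemma impneg S A B : derivable S (Imp A (Imp (sneg B) (sneg (Imp A B)))).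
Proof.
apply: deduction. apply: mp _ (contrapos _ _ _).
apply: deduction. exact: mp (lift _ (hyp _ _)) (hyp _ _).
Qed.

Lemma cases S A B : derivable S (Imp (Imp A B) (Imp (Imp (sneg A) B) B)).
Proof.
do 2 apply: deduction.
apply: mp (mp (lift _ (hyp _ _)) (contrapos _ _ _)) _.
apply: mp (mp (hyp _ _) (contrapos _ _ _)) _.
exact: ax3.
Qed.

Inductive pf := PA of nat | PI of pf & pf | PN of pf.

Fixpoint tr (a : nat -> F) p := match p with
  | PA i => a i | PI p q => Imp (tr a p) (tr a q) | PN p => sneg (tr a p) end.
Fixpoint ev (v : nat -> bool) p := match p with
  | PA i => v i | PI p q => ev v p ==> ev v q | PN p => ~~ ev v p end.
Fixpoint bnd m p := match p with
  | PA i => i < m | PI p q => bnd m p && bnd m q | PN p => bnd m p end.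

Definition lit (a : nat -> F) (v : nat -> bool) i := if v i then a i else sneg (a i).
Definition Gam a v lo hi : F -> Prop := fun x => exists i, lo <= i < hi /\ x = lit a v i.

Lemma kalmar a v m p : bnd m p ->
  derivable (Gam a v 0 m) (if ev v p then tr a p else sneg (tr a p)).
Proof.
elim: p => [i|p IHp q IHq|p IHp] /=.
- move=> hi; apply: d_hyp; exists i; split => //.
- case/andP=> /IHp hp /IHq hq.
  case: (ev v p) hp => hp; case: (ev v q) hq => hq /=.
  + exact: mp hq (ax1 _ _ _).
  + exact: mp hq (mp hp (impneg _ _ _)).
  + exact: mp hp (efq _ _ _).
  + exact: mp hp (efq _ _ _).
- move/IHp; case: (ev v p) => //= h. exact: mp h (dni _ _).
Qed.

Definition upd (v : nat -> bool) j b := fun i => if i == j then b else v i.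

Lemma elimk a m p : bnd m p -> (forall v, ev v p) ->
  forall j, j <= m -> forall v, derivable (Gam a v j m) (tr a p).
Proof.
move=> hb ht; elim=> [|j IH] hj v.
  move: (kalmar a v hb); rewrite ht; exact.
have hj' : j <= m by apply: ltnW.
have H1 := IH hj' (upd v j true). have H2 := IH hj' (upd v j false).
have E b : forall x, Gam a (upd v j b) j m x -> ext (Gam a v j.+1 m) (lit a (upd v j b) j) x.
  move=> x [i [/andP [hi1 hi2] ->]].
  case: (eqVneq i j) => [->|ne]; [by right|left].
  exists i; split; first by rewrite hi2 andbT ltn_neqAle eq_sym ne.
  by rewrite /lit /upd (negbTE ne).
move: (deduction (weaken (E true) H1)) (deduction (weaken (E false) H2)).
rewrite /lit /upd eqxx /= => h1 h2.
exact: mp h2 (mp h1 (cases _ _ _)).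
Qed.

Lemma taut_prov0 a m p : bnd m p -> (forall v, ev v p) -> provable (tr a p).
Proof.
move=> hb ht; have := elimk a hb ht (leqnn m) (fun _ => false).
apply: weaken => x [i [/andP [h1 h2] _]].
by move: (leq_trans h2 h1); rewrite ltnn.
Qed.

Fixpoint chk m v p := match m with
  | 0 => ev v p
  | S m' => chk m' (upd v m' true) p && chk m' (upd v m' false) p end.

Lemma ev_ext v w p : (forall i, v i = w i) -> ev v p = ev w p.
Proof. by move=> h; elim: p => [i|p IHp q IHq|p IHp] /=; rewrite ?IHp ?IHq. Qed.

Lemma ev_bnd v w m p : bnd m p -> (forall i, i < m -> v i = w i) -> ev v p = ev w p.
Proof.
move=> + h; elim: p => [i|p IHp q IHq|p IHp] /=; [by move/h|by case/andP=> /IHp -> /IHq ->|by move/IHp ->].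
Qed.

Lemma chk_ok m : forall v p, chk m v p -> forall w, (forall i, m <= i -> w i = v i) -> ev w p.
Proof.
elim: m => [|m IH] v p /=.
  by move=> h w hw; rewrite (ev_ext p (fun i => hw i isT)).
move=> /andP [h1 h2] w hw.
have hw' : forall i, m <= i -> w i = upd v m (w m) i.
  move=> i hi; rewrite /upd; case: (eqVneq i m) => [->//|ne].
  by apply: hw; rewrite ltn_neqAle eq_sym ne.
case E: (w m) hw' => hw'; [exact: IH h1 w hw'|exact: IH h2 w hw'].
Qed.

Lemma taut_prov a m p : bnd m p && chk m (fun _ => false) p -> provable (tr a p).
Proof.
case/andP=> hb hc; apply: (taut_prov0 _ (hb)) => v.
rewrite (ev_bnd (w := fun i => if i < m then v i else false) hb); last by move=> i ->.
apply: (chk_ok hc) => i hi; by rewrite ltnNge hi.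
Qed.

End Prop1.

Ltac setsolve := apply/setP => x; rewrite /cocat /common !inE;
  do ?case: (_ \in _) => //.

Section Main.
Variable n : nat.
Notation F := (form n).
Notation ch := (chain n).

Lemma tautL (l : seq F) m P : bnd m P && chk m (fun _ => false) P ->
  provable (tr (fun i => nth (@Var n 0) l i) P).
Proof. exact: taut_prov. Qed.

Definition PIff p q := PN (PI (PI p q) (PN (PI q p))).

Lemma pmp (A B : F) : provable A -> provable (Imp A B) -> provable B.
Proof. exact: d_mp. Qed.

Lemma setT_neq0 (hn : 0 < n) : (setT : ch) != set0.
Proof. by apply/set0Pn; exists (Ordinal hn); rewrite inE. Qed.

Lemma neg0 (phi : F) : neg set0 phi = phi.
Proof. rewrite /neg. destruct (boolP (set0 != set0)) as [h|h] => //. exfalso; by move: h; rewrite eqxx. Qed.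


Lemma cocatss (c : ch) : cocat c c = set0. Proof. setsolve. Qed.
Lemma cocat0s (c : ch) : cocat set0 c = c. Proof. setsolve. Qed.
Lemma cocats0 (c : ch) : cocat c set0 = c. Proof. setsolve. Qed.
Lemma cocatTC (c : ch) : cocat setT (~: c) = c. Proof. setsolve. Qed.

Lemma botT (hn : 0 < n) : provable (sneg (Bot (setT : ch))).
Proof.
have h0 : provable (Imp (@Var n 0) (@Var n 0)) by exact: imp_refl.
have h1 := d_ax (fun _ => False) (A4 (Imp (@Var n 0) (@Var n 0)) (setT_neq0 hn)).
apply: (pmp h1); apply: (pmp h0).
exact: (@tautL [:: Imp (@Var n 0) (@Var n 0); Bot setT] 2
  (PI (PA 0) (PI (PI (PA 0) (PI (PA 1) (PN (PA 0)))) (PN (PA 1)))) ltac:(by vm_compute)).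
Qed.

Lemma bot0 (hn : 0 < n) : provable (Bot (set0 : ch)).
Proof.
have h1 := d_ax (fun _ => False) (A6 (setT_neq0 hn) (setT_neq0 hn)).
rewrite cocatss in h1.
apply: (pmp h1); apply: (pmp (botT hn)).
apply: (@tautL [:: Bot (setT : ch); Bot set0] 2
  (PI (PN (PA 0)) (PI (PIff (PN (PA 0)) (PA 1)) (PA 1)))); by vm_compute.
Qed.

Lemma neqT_C (c : ch) : c != setT -> ~: c != set0.
Proof. move=> h; apply/negP => /eqP e; move/eqP: h; apply; by rewrite -[c]setCK e setC0. Qed.

Lemma charF (hn : 0 < n) (c : ch) (phi : F) :
  provable (fiff (neg c phi) (fiff phi (Bot c))).
Proof.
case: (eqVneq c set0) => [->|hc].
  rewrite neg0; apply: (pmp (bot0 hn)).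
  exact: (@tautL [:: phi; Bot set0] 2
    (PI (PA 1) (PIff (PA 0) (PIff (PA 0) (PA 1)))) ltac:(by vm_compute)).
case: (eqVneq c setT) => [->|hT].
  apply: (pmp (botT hn)).
  exact: (@tautL [:: phi; Bot setT] 2
    (PI (PN (PA 1)) (PIff (PN (PA 0)) (PIff (PA 0) (PA 1)))) ltac:(by vm_compute)).
have hc' := neqT_C hT.
have h1 := d_ax (fun _ => False) (A4 phi hc).
have h2 := d_ax (fun _ => False) (A4 (neg c phi) hc).
have h3 := d_ax (fun _ => False) (A5 phi hc hc). rewrite cocatss neg0 in h3.
have h4 := d_ax (fun _ => False) (A6 (setT_neq0 hn) hc'). rewrite cocatTC in h4.
have h5 := d_ax (fun _ => False) (A5 phi (setT_neq0 hn) hc'). rewrite cocatTC in h5.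
have h6 := d_ax (fun _ => False) (A4 phi hc').
have h7 := d_ax (fun _ => False) (A4 (neg (~: c) phi) hc').
have h8 := d_ax (fun _ => False) (A5 phi hc' hc'). rewrite cocatss neg0 in h8.
apply: (pmp h8); apply: (pmp h7); apply: (pmp h6); apply: (pmp h5);
apply: (pmp h4); apply: (pmp h3); apply: (pmp h2); apply: (pmp h1).
exact: (@tautL [:: phi; neg c phi; neg c (neg c phi); Bot c; Bot (~: c);
   neg (~: c) phi; neg (~: c) (neg (~: c) phi)] 7
  (PI (PI (PA 0) (PI (PA 3) (PA 1)))
  (PI (PI (PA 1) (PI (PA 3) (PA 2)))
  (PI (PIff (PA 2) (PA 0))
  (PI (PIff (PN (PA 4)) (PA 3))
  (PI (PIff (PN (PA 5)) (PA 1))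
  (PI (PI (PA 0) (PI (PA 4) (PA 5)))
  (PI (PI (PA 5) (PI (PA 4) (PA 6)))
  (PI (PIff (PA 6) (PA 0))
  (PIff (PA 1) (PIff (PA 0) (PA 3)))))))))))
  ltac:(by vm_compute)).
Qed.

Lemma xorF (hn : 0 < n) (a b : ch) :
  provable (fiff (Bot (cocat a b)) (fiff (Bot b) (Bot a))).
Proof.
case: (eqVneq a set0) => [->|ha].
  rewrite cocat0s; apply: (pmp (bot0 hn)).
  exact: (@tautL [:: Bot b; Bot set0] 2
    (PI (PA 1) (PIff (PA 0) (PIff (PA 0) (PA 1)))) ltac:(by vm_compute)).
case: (eqVneq b set0) => [->|hb].
  rewrite cocats0; apply: (pmp (bot0 hn)).
  exact: (@tautL [:: Bot a; Bot set0] 2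
    (PI (PA 1) (PIff (PA 0) (PIff (PA 1) (PA 0)))) ltac:(by vm_compute)).
have h1 := d_ax (fun _ => False) (A6 ha hb).
have h2 := charF hn a (Bot b).
apply: (pmp h2); apply: (pmp h1).
exact: (@tautL [:: neg a (Bot b); Bot (cocat a b); Bot b; Bot a] 4
  (PI (PIff (PA 0) (PA 1)) (PI (PIff (PA 0) (PIff (PA 2) (PA 3)))
    (PIff (PA 1) (PIff (PA 2) (PA 3))))) ltac:(by vm_compute)).
Qed.

Lemma disjF (hn : 0 < n) (a b : ch) : a :&: b = set0 ->
  provable (Imp (sneg (Bot a)) (Bot b)).
Proof.
move=> hab.
case: (eqVneq a set0) => [->|ha].
  apply: (pmp (bot0 hn)).
  exact: (@tautL [:: Bot set0; Bot b] 2
    (PI (PA 0) (PI (PN (PA 0)) (PA 1))) ltac:(by vm_compute)).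
have hsub : a \subset cocat a b.
  apply/subsetP => x hx; rewrite /cocat !inE hx /=.
  by move/setP: hab => /(_ x); rewrite !inE hx /= => ->.
have hne : cocat a b != set0.
  case/set0Pn: ha => x hx; apply/set0Pn; exists x; exact: (subsetP hsub).
have h1 := xorF hn a b.
have h2 := d_ax (fun _ => False) (A7 hne ha hsub).
apply: (pmp h2); apply: (pmp h1).
exact: (@tautL [:: Bot (cocat a b); Bot b; Bot a] 3
  (PI (PIff (PA 0) (PIff (PA 1) (PA 2))) (PI (PI (PA 0) (PA 2))
    (PI (PN (PA 2)) (PA 1)))) ltac:(by vm_compute)).
Qed.
End Main.

Theorem mainTheorem7 (n : nat) (hn : 0 < n) (ck cs : chain n)
  (hk : ck != set0) (hs : cs != set0) (phi psi : form n) :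
  let cr := common ck cs in
  provable (Imp (neg ck phi) (Imp (neg cs psi) (neg (cocat cs cr) (Imp phi psi)))).
Proof.
move=> cr.
have -> : cocat cs cr = cs :\: ck by rewrite /cr; setsolve.
set u := cs :&: ck; set p := cs :\: ck; set q := ck :\: cs.
have e1 : cocat u q = ck by rewrite /u /q; setsolve.
have e2 : cocat u p = cs by rewrite /u /p; setsolve.
have d1 : u :&: p = set0 by rewrite /u /p; setsolve.
have d2 : u :&: q = set0 by rewrite /u /q; setsolve.
have d3 : p :&: q = set0 by rewrite /q /p; setsolve.
have h1 := charF hn ck phi.
have h2 := charF hn cs psi.
have h3 := charF hn p (Imp phi psi).
have h4 := xorF hn u q. rewrite e1 in h4.
have h5 := xorF hn u p. rewrite e2 in h5.
have h6 := disjF hn d1.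
have h7 := disjF hn d2.
have h8 := disjF hn d3.
apply: (pmp h8); apply: (pmp h7); apply: (pmp h6); apply: (pmp h5);
apply: (pmp h4); apply: (pmp h3); apply: (pmp h2); apply: (pmp h1).
exact: (@tautL n [:: phi; psi; neg ck phi; neg cs psi; neg p (Imp phi psi);
   Bot ck; Bot cs; Bot u; Bot p; Bot q] 10
  (PI (PIff (PA 2) (PIff (PA 0) (PA 5)))
  (PI (PIff (PA 3) (PIff (PA 1) (PA 6)))
  (PI (PIff (PA 4) (PIff (PI (PA 0) (PA 1)) (PA 8)))
  (PI (PIff (PA 5) (PIff (PA 9) (PA 7)))
  (PI (PIff (PA 6) (PIff (PA 8) (PA 7)))
  (PI (PI (PN (PA 7)) (PA 8))
  (PI (PI (PN (PA 7)) (PA 9))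
  (PI (PI (PN (PA 8)) (PA 9))
  (PI (PA 2) (PI (PA 3) (PA 4)))))))))))
  ltac:(by vm_compute)).
Qed.
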